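(* Let $S$ be a semigroup with a zero element, defined by the finite complete semigroup presentation $\langle X\mid R\rangle$. Let $0$ be a symbol not in $X$ and let $z\in X^+$ be the $R$-irreducible word representing the zero of $S$. Then the rewriting system on $X\cup\{0\}$ $$R_0=R\cup\{(z,0)\}\cup\{(0x,0),(x0,0): x\in X\cup\{0\}\}$$ is finite and complete and defines $S$. Moreover, in this rewriting system the word $0$ is the irreducible word representing the zero of $S$.
   Context: A rewriting system $\langle X\mid R\rangle$ is a set $R$ of pairs $(u,v)$ (rules $u\to v$) of words $u,v\in X^+$; it is finite if $X$ and $R$ are finite. One-step reduction: $w_1uw_2\to_R w_1vw_2$ for $(u,v)\in R$, $w_1,w_2\in X^*$; $\to_R^*$ is its reflexive transitive closure. A word is $R$-irreducible if no rule applies to it. $R$ is noetherian if there is no infinite chain $w_1\to_R w_2\to_R\cdots$, confluent if $u\to_R^*v$ and $u\to_R^*v'$ imply a $w$ with $v\to_R^*w$, $v'\to_R^*w$, and complete if both; in a complete system each congruence class contains exactly one irreducible word. The semigroup defined by $\langle X\mid R\rangle$ is $X^+$ modulo the congruence generated by $R$. *)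

(* Defs.v *)
From mathcomp Require Import all_boot.
From Stdlib Require Import Relation_Operators.

Set Implicit Arguments.
Unset Strict Implicit.
Unset Printing Implicit Defensive.

Section Rewriting.
Variable X : eqType.

Definition rules_nonempty (R : seq (seq X * seq X)) : Prop :=
  forall u v, (u, v) \in R -> u != [::] /\ v != [::].

Definition step (R : seq (seq X * seq X)) (w w' : seq X) : Prop :=
  exists w1 w2 u v, (u, v) \in R /\ w = w1 ++ u ++ w2 /\ w' = w1 ++ v ++ w2.

Definition reduces (R : seq (seq X * seq X)) : seq X -> seq X -> Prop :=
  clos_refl_trans _ (step R).

Definition irreducible (R : seq (seq X * seq X)) (w : seq X) : Prop :=
  forall w', ~ step R w w'.

Definition noetherian (R : seq (seq X * seq X)) : Prop :=
  ~ exists f : nat -> seq X, forall n, step R (f n) (f n.+1).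

Definition confluent (R : seq (seq X * seq X)) : Prop :=
  forall u v v', reduces R u v -> reduces R u v' ->
    exists w, reduces R v w /\ reduces R v' w.

Definition complete (R : seq (seq X * seq X)) : Prop :=
  noetherian R /\ confluent R.

(* The congruence on words generated by R (one-step reduction is already
   compatible with concatenation, so its equivalence closure is the
   congruence generated by R).  The semigroup defined by <X | R> is
   X^+ modulo this congruence. *)
Definition congr (R : seq (seq X * seq X)) : seq X -> seq X -> Prop :=
  clos_refl_sym_trans _ (step R).

Definition represents_zero (R : seq (seq X * seq X)) (z : seq X) : Prop :=
  z != [::] /\
  forall w, w != [::] -> congr R (w ++ z) z /\ congr R (z ++ w) z.

End Rewriting.

(* The alphabet X ∪ {0}: [Some x] is the letter x, [None] is the new symbol 0. *)
Definition lift_rule (X : Type) (r : seq X * seq X) : seq (option X) * seq (option X) :=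
  (map Some r.1, map Some r.2).

Definition R0 (X : finType) (R : seq (seq X * seq X)) (z : seq X)
  : seq (seq (option X) * seq (option X)) :=
  map (@lift_rule X) R
  ++ [:: (map Some z, [:: None])]
  ++ flatten [seq [:: ([:: None; x], [:: None]); ([:: x; None], [:: None])]
             | x <- enum {: option X}].

(* <X∪{0} | R0> defines the same semigroup S as <X | R>, via the natural
   map induced by X ⊆ X∪{0}: this map X^+/R -> (X∪{0})^+/R0 is a
   well-defined injective (1) and surjective (2) semigroup homomorphism. *)
Definition defines_same_semigroup (X : finType) (R : seq (seq X * seq X))
  (R' : seq (seq (option X) * seq (option X))) : Prop :=
  (forall u v : seq X, u != [::] -> v != [::] ->
      (congr R u v <-> congr R' (map Some u) (map Some v))) /\
  (forall w : seq (option X), w != [::] ->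
      exists u : seq X, u != [::] /\ congr R' w (map Some u)).

(* Main.v *)
Require Import Defs.
From mathcomp Require Import all_boot zify.
From Stdlib Require Import Relation_Operators Operators_Properties Classical ClassicalEpsilon.

Set Implicit Arguments.
Unset Strict Implicit.
Unset Printing Implicit Defensive.

Arguments rt_step {A R x y}.
Arguments rt_refl {A R x}.
Arguments rt_trans {A R x y z}.
Arguments rst_step {A R x y}.
Arguments rst_refl {A R x}.
Arguments rst_sym {A R x y}.
Arguments rst_trans {A R x y z}.

Section Gen.
Variable X : eqType.
Implicit Types R : seq (seq X * seq X).

Lemma step_ctx R p s u v : step R u v -> step R (p ++ u ++ s) (p ++ v ++ s).
Proof.
case=> w1 [w2 [l [r [H [-> ->]]]]].
exists (p ++ w1), (w2 ++ s), l, r; split; first exact H.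
by split; rewrite !catA.
Qed.

Lemma red_ctx R p s u v : reduces R u v -> reduces R (p ++ u ++ s) (p ++ v ++ s).
Proof.
induction 1.
- by apply: rt_step; apply: step_ctx.
- exact: rt_refl.
- exact: rt_trans IHclos_refl_trans1 IHclos_refl_trans2.
Qed.

Lemma congr_ctx R p s u v : congr R u v -> congr R (p ++ u ++ s) (p ++ v ++ s).
Proof.
induction 1.
- by apply: rst_step; apply: step_ctx.
- exact: rst_refl.
- exact: rst_sym.
- exact: rst_trans IHclos_refl_sym_trans1 IHclos_refl_sym_trans2.
Qed.

Lemma red_congr R u v : reduces R u v -> congr R u v.
Proof.
induction 1.
- exact: rst_step.
- exact: rst_refl.
- exact: rst_trans IHclos_refl_trans1 IHclos_refl_trans2.
Qed.

Lemma CR R : confluent R -> forall u v, congr R u v ->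
  exists w, reduces R u w /\ reduces R v w.
Proof.
move=> Hc u v; induction 1 as [x y H|x|x y _ [w [H1 H2]]|x y t _ [w1 [A1 B1]] _ [w2 [A2 B2]]].
- exists y; split; [exact: rt_step | exact: rt_refl].
- exists x; split; exact: rt_refl.
- by exists w.
- have [w3 [C1 C2]] := Hc _ _ _ B1 A2.
  exists w3; split; [exact: rt_trans A1 C1 | exact: rt_trans B2 C2].
Qed.

End Gen.

Lemma noeth_acc (T : Type) (r : T -> T -> Prop) :
  ~ (exists f : nat -> T, forall n, r (f n) (f n.+1)) ->
  forall x, Acc (fun y x => r x y) x.
Proof.
move=> H x; apply: NNPP => Hx; apply: H.
pose P := fun x => ~ Acc (fun y x => r x y) x.
have next : forall x, P x -> exists y, r x y /\ P y.
  move=> a Pa; apply: NNPP => Hn; apply: Pa; constructor => y ray.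
  apply: NNPP => Hy; apply: Hn; by exists y.
pose S := {a | P a}.
pose nextS (s : S) : S :=
  let (y, Hy) := constructive_indefinite_description _ (next _ (proj2_sig s)) in
  exist _ y (proj2 Hy).
have Hn : forall s, r (proj1_sig s) (proj1_sig (nextS s)).
  move=> s; rewrite /nextS.
  by case: (constructive_indefinite_description _ _) => y [].
exists (fun n => proj1_sig (iter n nextS (exist _ x Hx))) => n.
by rewrite iterS; apply: Hn.
Qed.

Lemma acc_nochain (T : Type) (r : T -> T -> Prop) x :
  Acc (fun y x => r x y) x -> forall f, f 0 = x -> (forall n, r (f n) (f n.+1)) -> False.
Proof.
induction 1 as [x _ IH] => f H0 Hf.
apply: (IH (f 1) _ (fun n => f n.+1)) => //; first by rewrite -H0; apply: Hf.
Qed.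

Fixpoint seg (X : Type) (w : seq (option X)) : seq (seq X) :=
  match w with
  | [::] => [:: [::]]
  | None :: w => [::] :: seg w
  | Some x :: w => (x :: head [::] (seg w)) :: behead (seg w)
  end.

Fixpoint flat (X : Type) (p : seq (seq X)) : seq (option X) :=
  match p with [::] => [::] | s :: p => map Some s ++ None :: flat p end.

Lemma seg_ne (X : Type) (w : seq (option X)) : seg w = head [::] (seg w) :: behead (seg w).
Proof. by case: w => [|[x|] w]. Qed.

Lemma segS (X : Type) (s : seq X) r :
  seg (map Some s ++ r) = (s ++ head [::] (seg r)) :: behead (seg r).
Proof. elim: s => [|x s IH] /=; [exact: seg_ne | by rewrite IH]. Qed.

Lemma segSr (X : Type) (s : seq X) r T :
  seg r = [::] :: T -> seg (map Some s ++ r) = s :: T.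
Proof. by rewrite segS => ->; rewrite cats0. Qed.

Lemma seg_flat (X : Type) (p : seq (seq X)) w : seg (flat p ++ w) = p ++ seg w.
Proof.
elim: p => //= s p IH.
rewrite -catA /=. have E := (@segSr _ s (None :: flat p ++ w) (seg (flat p ++ w)) erefl). rewrite E IH. by [].
Qed.

Lemma decomp_l (X : Type) (w : seq (option X)) : exists p a, w = flat p ++ map Some a.
Proof.
elim: w => [|[x|] w [p [a ->]]]; first by exists [::], [::].
- case: p => [|s p] /=; first by exists [::], (x :: a).
  by exists ((x :: s) :: p), a.
- by exists ([::] :: p), a.
Qed.

Lemma decomp_r (X : Type) (w : seq (option X)) :
  exists b r T, w = map Some b ++ r /\ seg r = [::] :: T.
Proof.
elim: w => [|[x|] w [b [r [T [-> HT]]]]]; first by exists [::], [::], [::].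
- by exists (x :: b), r, T.
- by exists [::], (None :: map Some b ++ r), (seg (map Some b ++ r)).
Qed.

Section Ord.
Variable X : eqType.
Variable R : seq (seq X * seq X).

Definition Rel (y x : seq X) := step R x y \/ exists a b, x = a ++ y ++ b /\ size y < size x.

Definition Lrel (l' l : seq (seq X)) := exists p x q K,
  l = p ++ x :: q /\ l' = p ++ K ++ q /\ (forall y, y \in K -> Rel y x).

Lemma acc_rel W : Acc (fun y x => step R x y) W ->
  forall n l u r, size u < n -> W = l ++ u ++ r -> Acc Rel u.
Proof.
induction 1 as [W _ IH] => n; elim: n => [//|n IHn] l u r Hs HW.
constructor => y [Hst|[a [b [Hu Hy]]]].
- apply: (IH (l ++ y ++ r) _ (size y).+1 l y r) => //.
  by rewrite HW; apply: step_ctx.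
- apply: (IHn (l ++ a) y (b ++ r)).
  + by apply: leq_trans Hy _.
  + by rewrite HW Hu !catA.
Qed.

Lemma accL_cons x : Acc Rel x -> forall l, Acc Lrel l -> Acc Lrel (x :: l).
Proof.
induction 1 as [x _ IHx] => l Hl.
induction Hl as [l Hl IHl].
constructor => l' [p [y [q [K [E1 [E2 HK]]]]]].
case: p E1 E2 => [|x0 p] /= E1 ->.
- case: E1 => Ey Eq; subst y q.
  elim: K HK => [|y0 K IHK] HK /=; first by constructor.
  apply: IHx; first by apply: HK; rewrite inE eqxx.
  by apply: IHK => y Hy; apply: HK; rewrite inE Hy orbT.
- case: E1 => <- El.
  apply: IHl; exists p, y, q, K; split => //.
Qed.

Lemma accL (H : forall x, Acc Rel x) l : Acc Lrel l.
Proof.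
elim: l => [|x l IH]; last exact: accL_cons.
constructor => l' [[|? ?] [? [? [? []]]]] //.
Qed.

End Ord.

Section Main.
Variable X : finType.
Variable R : seq (seq X * seq X).
Variable z : seq X.
Hypothesis HRne : rules_nonempty R.
Hypothesis Hcomp : complete R.
Hypothesis Hzero : represents_zero R z.
Hypothesis Hirr : irreducible R z.

Lemma memR0 l r : (l, r) \in R0 R z ->
  [\/ exists u v, (u, v) \in R /\ l = map Some u /\ r = map Some v,
      l = map Some z /\ r = [:: None],
      exists x, l = [:: None; x] /\ r = [:: None]
    | exists x, l = [:: x; None] /\ r = [:: None]].
Proof.
rewrite /R0 !mem_cat => /orP [/mapP [[u v] Huv [-> ->]] | /orP [| /flatten_mapP [x _]]].
- by apply: Or41; exists u, v.
- rewrite inE => /eqP [-> ->]; exact: Or42.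
- rewrite !inE => /orP [/eqP [-> ->] | /eqP [-> ->]]; [apply: Or43 | apply: Or44]; by exists x.
Qed.

Lemma in_lift u v : (u, v) \in R -> (map Some u, map Some v) \in R0 R z.
Proof. by move=> H; rewrite /R0 mem_cat; apply/orP; left; exact: (map_f (@lift_rule X) H). Qed.

Lemma in_z : (map Some z, [:: None]) \in R0 R z.
Proof. by rewrite /R0 !mem_cat inE eqxx orbT. Qed.

Lemma in_0x x : ([:: None; x], [:: None]) \in R0 R z.
Proof.
rewrite /R0 !mem_cat; apply/orP; right; apply/orP; right; apply/flatten_mapP.
by exists x; [rewrite mem_enum | rewrite inE eqxx].
Qed.

Lemma in_x0 x : ([:: x; None], [:: None]) \in R0 R z.
Proof.
rewrite /R0 !mem_cat; apply/orP; right; apply/orP; right; apply/flatten_mapP.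
by exists x; [rewrite mem_enum | rewrite !inE eqxx orbT].
Qed.

Lemma map_Some_cat (q : seq X) a b : map Some q = a ++ b ->
  exists qa qb, q = qa ++ qb /\ a = map Some qa /\ b = map Some qb.
Proof.
elim: a q => [|x a IH] q /= E; first by exists [::], q.
case: q E => [|y q] //= [Ex E].
have [qa [qb [-> [-> ->]]]] := IH q E.
by exists (y :: qa), qb; rewrite -Ex.
Qed.

Lemma None_notin (q : seq X) : (None \in map Some q) = false.
Proof. by apply/negP => /mapP [x]. Qed.

Lemma stepD q w' : step (R0 R z) (map Some q) w' ->
  (exists q', w' = map Some q' /\ step R q q') \/
  (exists a b, q = a ++ z ++ b /\ w' = map Some a ++ None :: map Some b).
Proof.
case=> w1 [w2 [l [r [Hin [E1 ->]]]]].
have [qa [qb [Eq [Ew1 E']]]] := map_Some_cat E1.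
have [qc [qd [Eq' [El Ew2]]]] := map_Some_cat (esym E').
rewrite Ew1 Ew2.
case: (memR0 Hin) => [[u [v [Huv [Elu ->]]]] | [Elz ->] | [x [Ex ->]] | [x [Ex ->]]].
- have Ec : qc = u by apply: (inj_map Some_inj); rewrite -El Elu.
  left; exists (qa ++ v ++ qd); split; first by rewrite !map_cat.
  by exists qa, qd, u, v; rewrite Eq Eq' Ec.
- have Ec : qc = z by apply: (inj_map Some_inj); rewrite -El Elz.
  by right; exists qa, qd; rewrite Eq Eq' Ec.
- by have := None_notin qc; rewrite -El Ex inE eqxx.
- by have := None_notin qc; rewrite -El Ex !inE eqxx orbT.
Qed.

Definition Z (w : seq (option X)) := None \in w \/ exists u, w = map Some u /\ congr R u z.

Lemma Hz0 : z != [::].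
Proof. exact: (proj1 Hzero). Qed.

Lemma zero_infix a b : congr R (a ++ z ++ b) z.
Proof.
have zr : forall b', congr R (z ++ b') z.
  case=> [|c b']; first by rewrite cats0; exact: rst_refl.
  have /(proj2 Hzero) [_ H] : c :: b' != [::] by [].
  exact: H.
have zl : forall a', congr R (a' ++ z) z.
  case=> [|c a']; first exact: rst_refl.
  have /(proj2 Hzero) [H _] : c :: a' != [::] by [].
  exact: H.
have := congr_ctx a [::] (zr b); rewrite !cats0 => H.
exact: rst_trans H (zl a).
Qed.

Lemma step_congr_z q q' : step R q q' -> (congr R q z <-> congr R q' z).
Proof.
move=> H; split => Hc.
- exact: rst_trans (rst_sym (rst_step H)) Hc.
- exact: rst_trans (rst_step H) Hc.
Qed.

Lemma C1 x v : clos_refl_trans_1n _ (step (R0 R z)) x v -> forall q, x = map Some q ->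
  ~ congr R q z -> exists p, v = map Some p /\ reduces R q p /\ ~ congr R p z.
Proof.
induction 1 as [x|x y v Hxy _ IH] => q Ex Hq.
  by exists q; split => //; split => //; exact: rt_refl.
subst x; case: (stepD Hxy) => [[q' [Ey Hst]] | [a [b [Eq _]]]].
- have Hq' : ~ congr R q' z := fun H => Hq (proj2 (step_congr_z Hst) H).
  have [p [Ev [Hr Hp]]] := IH q' Ey Hq'.
  exists p; split => //; split => //; exact: rt_trans (rt_step Hst) Hr.
- by case: Hq; rewrite Eq; apply: zero_infix.
Qed.

Lemma Credu q v : ~ congr R q z -> reduces (R0 R z) (map Some q) v ->
  exists p, v = map Some p /\ reduces R q p /\ ~ congr R p z.
Proof. move=> Hq H; exact: C1 (clos_rt_rt1n _ _ _ _ H) q erefl Hq. Qed.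

Lemma Zstep w w' : Z w -> step (R0 R z) w w' -> Z w'.
Proof.
case=> [HN | [u [Ew Hu]]] Hst.
- left; case: Hst HN => w1 [w2 [l [r [Hin [-> ->]]]]]; rewrite !mem_cat => HN.
  case: (memR0 Hin) => [[u [v [_ [El ->]]]] | [_ ->] | [x [_ ->]] | [x [_ ->]]];
    rewrite ?inE ?eqxx ?orbT //.
  move: HN; rewrite El None_notin /=.
  by case/orP => ->; rewrite ?orbT.
- subst w; case: (stepD Hst) => [[q' [-> Hs]] | [a [b [_ ->]]]].
  + by right; exists q'; split => //; exact: (proj1 (step_congr_z Hs) Hu).
  + by left; rewrite mem_cat inE eqxx orbT.
Qed.

Lemma Zred w w' : reduces (R0 R z) w w' -> Z w -> Z w'.
Proof.
induction 1 => HZ; first exact: Zstep HZ H.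
- exact: HZ.
- exact: IHclos_refl_trans2 (IHclos_refl_trans1 HZ).
Qed.

Lemma red_None_l b : reduces (R0 R z) (None :: b) [:: None].
Proof.
elim: b => [|x b IH]; first exact: rt_refl.
apply: rt_trans IH; apply: rt_step.
exists [::], b, [:: None; x], [:: None]; split; [exact: in_0x | by split].
Qed.

Lemma red_None_r a : reduces (R0 R z) (a ++ [:: None]) [:: None].
Proof.
elim: a => [|x a IH] /=; first exact: rt_refl.
apply: (@rt_trans _ _ _ [:: x; None]).
  by have := red_ctx [:: x] [::] IH; rewrite /= !cats0.
apply: rt_step; exists [::], [::], [:: x; None], [:: None]; split; [exact: in_x0 | by split].
Qed.

Lemma red_None w : None \in w -> reduces (R0 R z) w [:: None].
Proof.
case/splitPr => a b.
apply: rt_trans (red_None_r a).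
by have := red_ctx a [::] (red_None_l b); rewrite !cats0.
Qed.

Lemma lift_step p q : step R p q -> step (R0 R z) (map Some p) (map Some q).
Proof.
case=> w1 [w2 [u [v [H [-> ->]]]]].
exists (map Some w1), (map Some w2), (map Some u), (map Some v).
by split; [exact: in_lift | rewrite !map_cat].
Qed.

Lemma lift_red p q : reduces R p q -> reduces (R0 R z) (map Some p) (map Some q).
Proof.
induction 1; [apply: rt_step; exact: lift_step | exact: rt_refl | exact: rt_trans IHclos_refl_trans1 IHclos_refl_trans2].
Qed.

Lemma lift_congr p q : congr R p q -> congr (R0 R z) (map Some p) (map Some q).
Proof.
induction 1; [apply: rst_step; exact: lift_step | exact: rst_refl | exact: rst_sym | exact: rst_trans IHclos_refl_sym_trans1 IHclos_refl_sym_trans2].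
Qed.

Lemma CRz u : congr R u z -> reduces R u z.
Proof.
move=> H; have [w [H1 H2]] := CR (proj2 Hcomp) H.
destruct (clos_rt_rt1n _ _ _ _ H2) as [|y w0 Hs _]; first exact: H1.
by case: (Hirr Hs).
Qed.

Lemma zstep : step (R0 R z) (map Some z) [:: None].
Proof.
exists [::], [::], (map Some z), [:: None]; split; [exact: in_z | by split; rewrite /= ?cats0].
Qed.

Lemma Zred_None w : Z w -> reduces (R0 R z) w [:: None].
Proof.
case=> [HN | [u [-> Hu]]]; first exact: red_None.
apply: rt_trans (lift_red (CRz Hu)) _; apply: rt_step; exact: zstep.
Qed.

Lemma ZSome p : Z (map Some p) -> congr R p z.
Proof. by case=> [|[u [E H]]]; [rewrite None_notin | rewrite (inj_map Some_inj E)]. Qed.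

Lemma noNone (w : seq (option X)) : None \notin w -> exists q, w = map Some q.
Proof.
elim: w => [|[x|] w IH]; first by exists [::].
- rewrite inE negb_or => /andP [_ /IH [q ->]]; by exists (x :: q).
- by rewrite inE eqxx.
Qed.

Lemma confR0 : confluent (R0 R z).
Proof.
move=> u v v' Hv Hv'; case: (classic (Z u)) => HZ.
  by exists [:: None]; split; apply: Zred_None; [exact: Zred Hv HZ | exact: Zred Hv' HZ].
have HN : None \notin u by apply/negP => H; apply: HZ; left.
have [q Eu] := noNone HN.
have Hq : ~ congr R q z by move=> H; apply: HZ; right; exists q.
subst u.
have [p [-> [Hp _]]] := Credu Hq Hv.
have [p' [-> [Hp' _]]] := Credu Hq Hv'.
have [r [A B]] := proj2 Hcomp _ _ _ Hp Hp'.
by exists (map Some r); split; apply: lift_red.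
Qed.


Lemma LrelP p x q K : (forall y, y \in K -> Rel R y x) -> Lrel R (p ++ K ++ q) (p ++ x :: q).
Proof. by move=> H; exists p, x, q, K. Qed.

Lemma LrelP2 p a x q K : (forall y, y \in K -> Rel R y x) ->
  Lrel R (p ++ a :: K ++ q) (p ++ a :: x :: q).
Proof. by move=> H; exists (p ++ [:: a]), x, q, K; rewrite -!catA. Qed.

Lemma segN (a b : seq X) r T : seg r = [::] :: T ->
  seg (map Some a ++ None :: map Some b ++ r) = a :: b :: T.
Proof. by move=> H; apply: segSr => /=; rewrite (segSr _ H). Qed.

Lemma segNN (a b : seq X) r T : seg r = [::] :: T ->
  seg (map Some a ++ None :: None :: map Some b ++ r) = a :: [::] :: b :: T.
Proof. by move=> H; apply: segSr => /=; rewrite (segSr _ H). Qed.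

Lemma stepL w w' : step (R0 R z) w w' -> Lrel R (seg w') (seg w).
Proof.
case=> w1 [w2 [l [r [Hin [-> ->]]]]].
have [p [a ->]] := decomp_l w1.
have [b [r' [T [-> HT]]]] := decomp_r w2.
rewrite -!catA !seg_flat.
case: (memR0 Hin) => [[u [v [Huv [-> ->]]]] | [-> ->] | [[x|] [-> ->]] | [[x|] [-> ->]]].
- rewrite !catA -!map_cat !(segSr _ HT).
  apply: (LrelP _ _ (K := [:: (a ++ v) ++ b])) => y; rewrite inE => /eqP ->.
  by left; exists a, b, u, v; rewrite -!catA.
- have E1 : map Some a ++ map Some z ++ map Some b ++ r' = map Some ((a ++ z) ++ b) ++ r'
    by rewrite !map_cat !catA.
  rewrite E1 (segSr _ HT) /= (segN _ _ HT).
  apply: (LrelP _ _ (K := [:: a; b])) => y; rewrite !inE => /orP [] /eqP ->; right.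
  + exists [::], (z ++ b); split; first by rewrite -catA.
    have : 0 < size z by case: z Hz0.
    rewrite !size_cat => Hz; rewrite -addnA -[X in X < _]addn0 ltn_add2l; exact: ltn_addr Hz.
  + exists (a ++ z), [::]; split; first by rewrite cats0.
    have : 0 < size z by case: z Hz0.
    rewrite !size_cat => Hz; by rewrite addnC -[X in X < _]addn0 ltn_add2l addn_gt0 Hz orbT.
- rewrite (@segN a (x :: b) r' T HT) (@segN a b r' T HT).
  apply: (LrelP2 _ _ _ (K := [:: b])) => y; rewrite inE => /eqP ->; right.
  by exists [:: x], [::]; rewrite cats0.
- rewrite (@segNN a b r' T HT) (@segN a b r' T HT).
  by apply: (LrelP2 _ _ _ (K := [::])) => y.
- have E : map Some a ++ [:: Some x; None] ++ map Some b ++ r' =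
           map Some (a ++ [:: x]) ++ None :: map Some b ++ r'
    by rewrite map_cat -catA.
  rewrite E (@segN (a ++ [:: x]) b r' T HT) (@segN a b r' T HT).
  apply: (LrelP _ _ (K := [:: a])) => y; rewrite inE => /eqP ->; right.
  by exists [::], [:: x]; rewrite size_cat addn1.
- rewrite (@segNN a b r' T HT) (@segN a b r' T HT).
  by apply: (LrelP2 _ _ _ (K := [::])) => y.
Qed.

Lemma noethR0 : noetherian (R0 R z).
Proof.
move=> [f Hf].
have HA : forall x, Acc (Rel R) x.
  move=> x; apply: (@acc_rel _ R x (noeth_acc (proj1 Hcomp) x) (size x).+1 [::] x [::]) => //.
  by rewrite /= cats0.
apply: (@acc_nochain _ (fun l l' => Lrel R l' l) (seg (f 0)) _ (fun n => seg (f n)) erefl).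
- exact: (accL HA (seg (f 0))).
- move=> n; exact: stepL (Hf n).
Qed.

End Main.

Theorem proposition2p1 (X : finType) (R : seq (seq X * seq X)) (z : seq X) :
  rules_nonempty R ->
  complete R ->
  represents_zero R z ->
  irreducible R z ->
  [/\ rules_nonempty (R0 R z),
      complete (R0 R z),
      defines_same_semigroup R (R0 R z),
      represents_zero (R0 R z) [:: None]
    & irreducible (R0 R z) [:: None] /\ congr (R0 R z) (map Some z) [:: None]].
Proof.
move=> HRne Hcomp Hzero Hirr.
have Hz0 : z != [::] := proj1 Hzero.
have Hne : rules_nonempty (R0 R z).
  move=> l r /memR0 [[u [v [H [-> ->]]]] | [-> ->] | [x [-> ->]] | [x [-> ->]]] //.
  - have [Hu Hv] := HRne _ _ H.
    by split; rewrite -size_eq0 size_map size_eq0.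
  - by split => //; rewrite -size_eq0 size_map size_eq0.
have Hconf := @confR0 X R z Hcomp Hzero Hirr.
split => //.
- split; [exact: noethR0 Hcomp Hzero | exact: Hconf].
- split.
  + move=> u v _ _; split => H; first exact: lift_congr.
    have [w [Hu Hv]] := CR Hconf H.
    case: (classic (congr R u z)) => Cu; case: (classic (congr R v z)) => Cv.
    * exact: rst_trans Cu (rst_sym Cv).
    * have [p [Ew [_ Hp]]] := Credu Hzero Cv Hv.
      have := Zred Hu (or_intror (ex_intro _ u (conj erefl Cu))).
      by rewrite Ew => /ZSome.
    * have [p [Ew [_ Hp]]] := Credu Hzero Cu Hu.
      have := Zred Hv (or_intror (ex_intro _ v (conj erefl Cv))).
      by rewrite Ew => /ZSome.
    * have [p [Ew [Hp _]]] := Credu Hzero Cu Hu.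
      have [p' [Ew' [Hp' _]]] := Credu Hzero Cv Hv.
      have Epp : p = p' by apply: (inj_map Some_inj); rewrite -Ew -Ew'.
      subst p'.
      exact: rst_trans (red_congr Hp) (rst_sym (red_congr Hp')).
  + move=> w Hw; case: (boolP (None \in w)) => HN.
    * exists z; split => //.
      exact: rst_trans (red_congr (red_None R z HN)) (rst_sym (rst_step (zstep R z))).
    * have [q Eq] := noNone HN; exists q; split; last by rewrite Eq; exact: rst_refl.
      by move: Hw; rewrite Eq; clear Eq; case: q.
- split => // w Hw; split; apply: red_congr; apply: (red_None R z);
    by rewrite mem_cat inE eqxx ?orbT.
- split; last exact: rst_step (zstep R z).
  move=> w' [w1 [w2 [l [r [Hin [E _]]]]]].
  have Hs := f_equal size E; rewrite /= !size_cat in Hs.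
  case: (memR0 Hin) => [[u [v [H [El _]]]] | [El _] | [x [El _]] | [x [El _]]].
  + have [Hu _] := HRne _ _ H.
    move: Hu El; clear H; case: u => [|y u] // _ El.
    have : Some y \in [:: None] by rewrite E El !mem_cat inE eqxx orbT.
    by rewrite inE.
  + move: El; case E0: z Hz0 => [|y u] // _ El.
    have : Some y \in [:: None] by rewrite E El !mem_cat inE eqxx orbT.
    by rewrite inE.
  + by rewrite El /= in Hs; lia.
  + by rewrite El /= in Hs; lia.
Qed.
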